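(* Let $(G,b,x,2)$ be an instance of Collapsed $k$-Core with $k=2$ such that $G$ is its own $2$-core (every vertex of $G$ has degree at least $2$) and no connected component of $G$ is a cycle. If there is a set $B\subseteq V(G)$ with $|B|\le b$ such that the $2$-core of $G-B$ has at most $x$ vertices, then there is also a set $B'\subseteq V(G)$ with $|B'|\le b$ such that the $2$-core of $G-B'$ has at most $x$ vertices and every vertex of $B'$ has degree larger than $2$ in $G$.
   Context: For an integer $k$, the $k$-core of a graph $G$ is the (uniquely determined) largest induced subgraph of $G$ in which every vertex has degree at least $k$ (possibly empty); its size is its number of vertices. Collapsed $k$-Core: given an undirected graph $G=(V,E)$ and integers $b$, $x$, $k$, decide whether there is a set $S\subseteq V$ with $|S|\le b$ such that the $k$-core of $G-S$ has at most $x$ vertices. *)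

(* Defs.v *)
(* A finite simple graph is a symmetric irreflexive relation
   e on a finite vertex type T. *)
From mathcomp Require Import all_boot.
Set Implicit Arguments. Unset Strict Implicit. Unset Printing Implicit Defensive.

Definition nbhd (T : finType) (e : rel T) (v : T) : {set T} := [set u | e v u].

Definition deg (T : finType) (e : rel T) (v : T) : nat := #|nbhd e v|.

Definition deg_in (T : finType) (e : rel T) (C : {set T}) (v : T) : nat :=
  #|nbhd e v :&: C|.

Definition min_deg_ge (T : finType) (e : rel T) (k : nat) (C : {set T}) : bool :=
  [forall v in C, k <= deg_in e C v].

(* The k-core of the subgraph of G induced by A: the union of all vertex sets
   C included in A inducing a subgraph of minimum degree >= k; this union is
   itself such a set, hence the (unique) largest one. *)
Definition kcore (T : finType) (e : rel T) (k : nat) (A : {set T}) : {set T} :=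
  \bigcup_(C : {set T} | (C \subset A) && min_deg_ge e k C) C.

Definition component (T : finType) (e : rel T) (v : T) : {set T} :=
  [set u | connect e v u].

Definition induces_cycle (T : finType) (e : rel T) (C : {set T}) : Prop :=
  exists s : seq T,
    [/\ uniq s, 3 <= size s, (forall v, (v \in C) = (v \in s)) &
        forall u v, u \in C -> v \in C ->
          e u v = (v == next s u) || (u == next s v)].

(* Main.v *)
Require Import Defs.
From mathcomp Require Import all_boot zify.
Set Implicit Arguments. Unset Strict Implicit. Unset Printing Implicit Defensive.

Section S.
Variables (T : finType) (e : rel T).
Hypotheses (e_sym : symmetric e) (e_irr : irreflexive e).

Lemma cyc_of (q a c : seq T) y y' : q = a ++ y :: c -> uniq q -> sorted e q ->
  y' \in c -> y != y' -> e (last y c) y -> e (last y c) y' ->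
  exists s, [/\ uniq s, 3 <= size s, cycle e s & {subset s <= q}].
Proof.
move=> Dq uq sq y'c yy' ey ey'.
have uc : uniq (y :: c) by move: uq; rewrite Dq cat_uniq => /and3P[].
exists (y :: c); split => //.
- have -> : 3 = size [:: y; y'; last y c] by [].
  apply: uniq_leq_size.
    rewrite /= !inE negb_or yy' andbT.
    have h1 : last y c != y by apply/eqP => E; move: ey; rewrite E e_irr.
    have h2 : last y c != y' by apply/eqP => E; move: ey'; rewrite E e_irr.
    by rewrite eq_sym h1 eq_sym h2.
  move=> z; rewrite !inE => /or3P[] /eqP ->; rewrite ?inE ?eqxx ?y'c ?orbT //.
  exact: mem_last.
- rewrite /cycle rcons_path ey andbT.
  by move: sq; rewrite Dq sorted_cat_cons => /andP[].
- by move=> z zc; rewrite Dq mem_cat zc orbT.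
Qed.

Lemma cycle_closed (q : seq T) x0 : last x0 q \in q -> uniq q -> sorted e q ->
  1 < deg e (last x0 q) -> {subset nbhd e (last x0 q) <= q} ->
  exists s, [/\ uniq s, 3 <= size s, cycle e s & {subset s <= q}].
Proof.
move=> lq uq sq /card_gt1P [y1 [y2 [h1 h2 h12]]] hn.
have y1q := hn _ h1; have y2q := hn _ h2; rewrite /nbhd !inE in h1 h2.
move: y1q y2q uq sq h1 h2; case/splitPr => [a c] y2q uq sq h1 h2.
rewrite last_cat /= in h1 h2.
rewrite mem_cat inE (eq_sym y2) (negPf h12) /= in y2q.
case/orP: y2q => [y2a|y2c].
  move: y2a uq sq h1 h2; case/splitPr => [a1 a2] uq sq h1 h2.
  apply: (@cyc_of _ a1 (a2 ++ y1 :: c) y2 y1).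
  - by rewrite -catA.
  - by [].
  - by [].
  - by rewrite mem_cat inE eqxx orbT.
  - by rewrite eq_sym.
  - by rewrite last_cat.
  - by rewrite last_cat.
exact: (@cyc_of _ a c y1 y2).
Qed.

Hypothesis own2 : forall v, 2 <= deg e v.

Lemma noext v p : uniq (v :: p) -> path e v p ->
    {subset v :: p <= [pred u | connect e v u]} ->
    ~~ [exists z in nbhd e (last v p), z \notin v :: p] ->
    exists s, [/\ uniq s, 3 <= size s, cycle e s &
      {subset s <= [pred u | connect e v u]}].
Proof.
move=> hu hp hc nz.
have [s [s1 s2 s3 s4]] : exists s, [/\ uniq s, 3 <= size s, cycle e s & {subset s <= v :: p}].
  apply: (@cycle_closed _ v) => //.
  + exact: (mem_last v p).
  + move=> z zn; apply/negPn; move: nz; rewrite negb_exists => /forallP /(_ z).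
    by rewrite zn.
by exists s; split => // u /s4 /hc.
Qed.

Lemma find_cycle v : exists s, [/\ uniq s, 3 <= size s, cycle e s &
  {subset s <= [pred u | connect e v u]}].
Proof.
suff H : forall n p, #|T| - size p <= n -> uniq (v :: p) -> path e v p ->
    {subset v :: p <= [pred u | connect e v u]} ->
    exists s, [/\ uniq s, 3 <= size s, cycle e s &
      {subset s <= [pred u | connect e v u]}].
  apply: (H _ [::] (leqnn _)) => //.
  by move=> u; rewrite inE => /eqP ->; rewrite inE connect0.
elim=> [|n IH] p hn hu hp hc;
  (have [/existsP [z /andP [zn zp]]|nz] := boolP [exists z in nbhd e (last v p), z \notin v :: p]);
  try exact: (noext hu hp hc nz).
- have : uniq (rcons (v :: p) z) by rewrite rcons_uniq zp hu.
  move/card_uniqP; rewrite size_rcons /= => hs.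
  have := max_card (mem (rcons (v :: p) z)); rewrite hs. lia.
- apply: (IH (rcons p z)).
  + have : uniq (rcons (v :: p) z) by rewrite rcons_uniq zp hu.
    move/card_uniqP; rewrite size_rcons /= => hs.
    have := max_card (mem (rcons (v :: p) z)); rewrite hs size_rcons. move: hn; set K := #|T|; set P := size p; lia.
  + by rewrite -rcons_cons rcons_uniq zp hu.
  + by rewrite rcons_path hp; rewrite /nbhd inE in zn.
  + move=> u; rewrite -rcons_cons mem_rcons inE => /orP [/eqP ->|]; last exact: hc.
    rewrite inE /nbhd inE in zn *.
    have := hc (last v p) (mem_last v p); rewrite inE => hl.
    by apply: connect_trans hl (connect1 zn).
Qed.

Lemma next_neq_prev (s : seq T) x : uniq s -> 2 < size s -> x \in s ->
  next s x != prev s x.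
Proof.
move=> us ss xs; apply/eqP => E.
have nn : next s (next s x) = x by rewrite E next_prev.
case: (rot_to xs) => i s' Ds.
have us' : uniq (x :: s') by rewrite -Ds rot_uniq.
have ss' : 2 < size (x :: s') by rewrite -Ds size_rot.
have {}nn : next (x :: s') (next (x :: s') x) = x by rewrite -Ds !(next_rot i us).
move: us' ss' nn; case: s' {Ds} => [|y [|z r]] //= /andP [].
rewrite !inE !negb_or => /and3P [xy xz xr] /andP [yz _] _.
rewrite eqxx /= (eq_sym y) (negPf xy) eqxx /=.
by move=> E2; move: xz; rewrite E2 eqxx.
Qed.

Lemma nbhd_cyc (s : seq T) x : uniq s -> 2 < size s -> cycle e s -> x \in s ->
  deg e x = 2 -> nbhd e x = [set next s x; prev s x].
Proof.
move=> us ss cs xs dx; have dx' : #|nbhd e x| = 2 := dx; apply/eqP; rewrite eq_sym eqEcard dx' cards2 next_neq_prev //.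
rewrite andbT; apply/subsetP => y; rewrite !inE /nbhd => /orP [] /eqP ->.
  exact: next_cycle.
by rewrite e_sym; apply: prev_cycle.
Qed.

Lemma cycle_induces v (s : seq T) : uniq s -> 2 < size s -> cycle e s ->
  {subset s <= [pred u | connect e v u]} ->
  (forall u, connect e v u -> deg e u = 2) -> induces_cycle e (component e v).
Proof.
move=> us ss cs sv d2.
have cl : forall y z, e y z -> y \in s -> z \in s.
  move=> y z yz ys; have ny := nbhd_cyc us ss cs ys (d2 _ (sv _ ys)).
  have : z \in nbhd e y by rewrite /nbhd inE.
  by rewrite ny !inE => /orP [] /eqP ->; rewrite ?mem_next ?mem_prev.
have csym : connect_sym e by apply: sym_connect_sym.
have cls : closed e s by apply: intro_closed.
have s0 : head v s \in s by move: ss; case: s {us cs sv cl cls} => //= a r _; rewrite inE eqxx.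
have vs : v \in s.
  rewrite -(closed_connect cls (x := head v s)) //.
  by rewrite csym; have := sv _ s0.
have memC : forall u, (u \in component e v) = (u \in s).
  move=> u; rewrite /component inE; apply/idP/idP.
    by move=> vu; rewrite -(closed_connect cls vu).
  by move=> /sv.
exists s; split => // y z; rewrite !memC => ys zs.
apply/idP/idP.
  move=> yz; have : z \in nbhd e y by rewrite /nbhd inE.
  rewrite (nbhd_cyc us ss cs ys (d2 _ (sv _ ys))) !inE => /orP [->//|/eqP ->].
  by rewrite next_prev // eqxx orbT.
case/orP => /eqP ->; first exact: next_cycle.
by rewrite e_sym; apply: next_cycle.
Qed.

Hypothesis no_cyc : forall v : T, ~ induces_cycle e (component e v).

Definition e2 := [rel x y | e x y && (deg e x == 2)].

Lemma md_step (C : {set T}) x y : min_deg_ge e 2 C -> x \in C -> deg e x = 2 ->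
  e x y -> y \in C.
Proof.
move=> /forallP /(_ x) md xC dx xy; move: md; rewrite xC /= /deg_in => md.
have : nbhd e x :&: C == nbhd e x.
  by rewrite eqEcard subsetIl -/(deg e x) dx md.
move/eqP/setIidPl/subsetP => sub; apply: sub; by rewrite /nbhd inE.
Qed.

Lemma key v : exists w, 2 < deg e w /\
  forall C : {set T}, min_deg_ge e 2 C -> v \in C -> w \in C.
Proof.
have cl1 : forall C : {set T}, min_deg_ge e 2 C -> v \in C ->
    forall u, connect e2 v u -> u \in C.
  move=> C md vC u /connectP [p pp ->] {u}.
  elim: p v vC pp => [|a p IH] y yC //= /andP [/andP [ya /eqP dy] pp].
  by apply: IH pp; apply: (md_step md yC dy ya).
have [/existsP [w /andP [vw dw]]|nw] := boolP [exists w, connect e2 v w && (2 < deg e w)].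
  by exists w; split => // C md vC; apply: cl1 vC _ vw.
exfalso.
have d2 : forall u, connect e2 v u -> deg e u = 2.
  move=> u vu; apply/eqP; rewrite eqn_leq own2 andbT leqNgt.
  by apply/negP => du; move: nw; rewrite negb_exists => /forallP /(_ u); rewrite vu du.
have c2 : forall p a, connect e2 v a -> path e a p -> connect e2 v (last a p).
  elim=> [|b p IH] a va //= /andP [ab pp]; apply: IH pp.
  apply: (connect_trans va (connect1 _)); by rewrite /e2 /= ab (d2 _ va).
have d2' : forall u, connect e v u -> deg e u = 2.
  move=> u /connectP [p pp ->]; apply: d2; exact: c2 (connect0 _ _) pp.
have [s [s1 s2 s3 s4]] := find_cycle v.
exact: (no_cyc (cycle_induces s1 s2 s3 s4 d2')).
Qed.
End S.

Lemma kcore_mono (T : finType) (e : rel T) (A1 A2 : {set T}) :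
  (forall C : {set T}, C \subset A1 -> min_deg_ge e 2 C -> C \subset A2) ->
  kcore e 2 A1 \subset kcore e 2 A2.
Proof.
move=> H; apply/bigcupsP => C /andP [cA md].
by apply: (bigcup_sup C); rewrite H.
Qed.

Theorem mainTheorem7 (T : finType) (e : rel T)
    (e_sym : symmetric e) (e_irr : irreflexive e) (b x : nat)
    (own_2core : forall v : T, 2 <= deg e v)
    (no_cycle_comp : forall v : T, ~ induces_cycle e (component e v))
    (hB : exists B : {set T}, #|B| <= b /\ #|kcore e 2 (~: B)| <= x) :
  exists B' : {set T},
    [/\ #|B'| <= b, #|kcore e 2 (~: B')| <= x &
        forall v, v \in B' -> 2 < deg e v].
Proof.
have fin : forall B : {set T}, #|B| <= b -> #|kcore e 2 (~: B)| <= x ->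
    ~~ [exists v in B, deg e v <= 2] ->
    exists B' : {set T}, [/\ #|B'| <= b, #|kcore e 2 (~: B')| <= x &
        forall v, v \in B' -> 2 < deg e v].
  move=> B hb hx nv; exists B; split => // v vB; rewrite ltnNge.
  by apply/negP => dv; move: nv; rewrite negb_exists => /forallP /(_ v); rewrite vB dv.
case: hB => B0 [hb0 hx0].
suff H : forall n (B : {set T}), #|[set u in B | deg e u <= 2]| <= n ->
    #|B| <= b -> #|kcore e 2 (~:B)| <= x -> exists B' : {set T},
    [/\ #|B'| <= b, #|kcore e 2 (~: B')| <= x & forall v, v \in B' -> 2 < deg e v].
  exact: (H _ B0 (leqnn _)).
elim=> [|n IH] B hn hb hx;
  (have [/existsP [v /andP [vB dv]]|nv] := boolP [exists v in B, deg e v <= 2]);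
  try exact: (fin B hb hx nv).
  have h : 0 < #|[set u in B | deg e u <= 2]| by apply/card_gt0P; exists v; rewrite inE vB dv.
  by move: hn; rewrite leqn0 => /eqP E; rewrite E in h.
have [w [dw wC]] := key e_sym e_irr own_2core no_cycle_comp v.
have dv2 : deg e v = 2 by apply/eqP; rewrite eqn_leq dv own_2core.
apply: (IH (w |: (B :\ v))).
- have sub : [set u in w |: (B :\ v) | deg e u <= 2] \subset [set u in B | deg e u <= 2] :\ v.
    apply/subsetP => u; rewrite !inE => /andP [/orP [/eqP ->|/andP [uv uB]] du].
      by move: du; rewrite leqNgt dw.
    by rewrite uv uB du.
  have := subset_leq_card sub.
  have := cardsD1 v [set u in B | deg e u <= 2]; rewrite inE vB dv /=.
  move: hn; set a := #|_ :\ v|; set c := #|[set u in B | _]|; set d := #|[set u in _ | _]|.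
  lia.
- rewrite cardsU1; have := cardsD1 v B; rewrite vB /=.
  move: hb; set a := #|B :\ v|; set c := #|B|; case: (w \notin B :\ v) => /=; lia.
- apply: leq_trans hx; apply: subset_leq_card; apply: kcore_mono => C CA md.
  apply/subsetP => u uC; have := subsetP CA u uC; rewrite !inE negb_or => /andP [uw].
  case: (eqVneq u v) => [E|uv] /=; last by [].
  move=> _; have wc : w \in C by apply: (wC C md); rewrite -E.
  by have := subsetP CA w wc; rewrite !inE eqxx.
Qed.
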